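(* Let $u=u_1\cdots u_m$ be a quasi-strict pin word corresponding to a permutation $\pi$ and $w$ a strict pin word corresponding to a permutation $\sigma$. If $\phi(u_2\cdots u_m)$ is a factor of $\phi(w)$ beginning at a position $p\ge3$ (i.e. $\phi(w)=y\,\phi(u_2\cdots u_m)\,y'$ with $|y|\ge2$), then $\pi\le\sigma$.
   Context: Permutations of length $n$ are bijections of $\{1,\dots,n\}$, identified with their diagrams $\{(i,\sigma(i))\}$; $\pi\le\sigma$ means some subsequence of $\sigma$ is order isomorphic to $\pi$. Pins are points of $\mathbb{Z}^2$. A pin $p$ separates a set $P$ from a set $Q$ horizontally (resp. vertically) if the horizontal (resp. vertical) line through $p$ has $P$ strictly on one side and $Q$ strictly on the other. A pin sequence is a sequence $(p_1,\dots,p_k)$ of pins, no two in a common row or column, such that for every $i\ge2$, $p_i$ lies outside the bounding box of $\{p_1,\dots,p_{i-1}\}$ and either $p_i$ separates $p_{i-1}$ from $\{p_1,\dots,p_{i-2}\}$ or $p_i$ is independent from $\{p_1,\dots,p_{i-1}\}$. A pin representation of $\sigma$ is a pin sequence order isomorphic to its diagram. Pin words: given a pin representation $(p_1,\dots,p_n)$ and an origin $p_0$ such that $(p_0,\dots,p_n)$ is a pin sequence, each $p_i$ ($i\ge1$) is encoded by $U$ (resp. $D,L,R$) if $p_i$ separates $p_{i-1}$ from $\{p_0,\dots,p_{i-2}\}$ and lies above (resp. below, left of, right of) the bounding box of $\{p_0,\dots,p_{i-1}\}$, and by $1$ (resp. $2,3,4$) if $p_i$ is independent from $\{p_0,\dots,p_{i-1}\}$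 and lies in the up-right (resp. up-left, bottom-left, bottom-right) corner region of that bounding box. The word then corresponds to $\sigma$. Letters $1,2,3,4$ are numerals, $U,D,L,R$ directions. A strict pin word has length $\ge2$, a numeral first, then only directions; a quasi-strict pin word has length $\ge2$, two numerals first, then only directions. $\phi$ is defined on words consisting of a numeral followed by a nonempty word over $\{L,R,U,D\}$ alternating between $\{L,R\}$ and $\{U,D\}$, by $\phi(u'u'')=\varphi(u')u''$ for $|u'|=2$ with $\varphi$: $1R\mapsto RUR$, $2R\mapsto LUR$, $3R\mapsto LDR$, $4R\mapsto RDR$, $1L\mapsto RUL$, $2L\mapsto LUL$, $3L\mapsto LDL$, $4L\mapsto RDL$, $1U\mapsto URU$, $2U\mapsto ULU$, $3U\mapsto DLU$, $4U\mapsto DRU$, $1D\mapsto URD$, $2D\mapsto ULD$, $3D\mapsto DLD$, $4D\mapsto DRD$; on single numerals $\phi(1)=\{UR,RU\}$, $\phi(2)=\{UL,LU\}$, $\phi(3)=\{DL,LD\}$, $\phi(4)=\{RD,DR\}$ (for $m=2$ the hypothesis means some element of $\phi(u_2)$ occurs as stated). A factor is a contiguous subword; positions are numbered from $1$. *)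

(* Defs.v *)
From HB Require Import structures.
From mathcomp Require Import all_boot all_order all_algebra all_fingroup.
Set Implicit Arguments. Unset Strict Implicit. Unset Printing Implicit Defensive.
Import Order.TTheory GRing.Theory Num.Theory.

Definition pattern_le (k n : nat) (pi : 'S_k) (sigma : 'S_n) : Prop :=
  exists f : 'I_k -> 'I_n,
    (forall i j : 'I_k, i < j -> f i < f j) /\
    (forall i j : 'I_k, (pi i < pi j) = (sigma (f i) < sigma (f j))).

Definition pt := (int * int)%type.

Local Open Scope ring_scope.

Definition separates_h (p : pt) (P Q : seq pt) : bool :=
  (all (fun a => a.2 < p.2) P && all (fun b => p.2 < b.2) Q) ||
  (all (fun a => p.2 < a.2) P && all (fun b => b.2 < p.2) Q).

Definition separates_v (p : pt) (P Q : seq pt) : bool :=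
  (all (fun a => a.1 < p.1) P && all (fun b => p.1 < b.1) Q) ||
  (all (fun a => p.1 < a.1) P && all (fun b => b.1 < p.1) Q).

Definition separates (p : pt) (P Q : seq pt) : bool :=
  separates_h p P Q || separates_v p P Q.

Definition independent (p : pt) (P : seq pt) : bool :=
  ~~ (has (fun a => a.2 < p.2) P && has (fun a => p.2 < a.2) P) &&
  ~~ (has (fun a => a.1 < p.1) P && has (fun a => p.1 < a.1) P).

Definition in_bbox (p : pt) (P : seq pt) : bool :=
  [&& has (fun a => a.1 <= p.1) P, has (fun a => p.1 <= a.1) P,
      has (fun a => a.2 <= p.2) P & has (fun a => p.2 <= a.2) P].

Definition dflt_pt : pt := (0%:Z, 0%:Z).

Definition pin_seq (s : seq pt) : Prop :=
  (forall i j, (i < j < size s)%N ->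
     ((nth dflt_pt s i).1 != (nth dflt_pt s j).1) &&
     ((nth dflt_pt s i).2 != (nth dflt_pt s j).2)) /\
  (forall i, (1 <= i < size s)%N ->
     ~~ in_bbox (nth dflt_pt s i) (take i s) &&
     (separates (nth dflt_pt s i) [:: nth dflt_pt s i.-1] (take i.-1 s)
      || independent (nth dflt_pt s i) (take i s))).

Definition order_iso_diagram (n : nat) (s : seq pt) (sigma : 'S_n) : Prop :=
  size s = n /\
  exists f : 'I_n -> 'I_n, bijective f /\
    forall a b : 'I_n,
      ((nth dflt_pt s a).1 < (nth dflt_pt s b).1) = (f a < f b)%N /\
      ((nth dflt_pt s a).2 < (nth dflt_pt s b).2) = (sigma (f a) < sigma (f b))%N.

Definition pin_representation (n : nat) (s : seq pt) (sigma : 'S_n) : Prop :=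
  pin_seq s /\ order_iso_diagram s sigma.

Inductive letter := N1 | N2 | N3 | N4 | LU | LD | LL | LR.

Definition letter_to_nat (c : letter) : nat :=
  match c with N1 => 0 | N2 => 1 | N3 => 2 | N4 => 3
             | LU => 4 | LD => 5 | LL => 6 | LR => 7 end.
Definition nat_to_letter (k : nat) : letter :=
  match k with 0 => N1 | 1 => N2 | 2 => N3 | 3 => N4
             | 4 => LU | 5 => LD | 6 => LL | _ => LR end.
Lemma letter_natK : cancel letter_to_nat nat_to_letter.
Proof. by case. Qed.
HB.instance Definition _ := Equality.copy letter (can_type letter_natK).

Definition word := seq letter.

Definition is_numeral (c : letter) : bool :=
  match c with N1 | N2 | N3 | N4 => true | _ => false end.
Definition is_dir (c : letter) : bool := ~~ is_numeral c.
Definition is_LR (c : letter) : bool :=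
  match c with LL | LR => true | _ => false end.

(* Encoding of the pin q_i (i >= 1) of q = (p_0, p_1, ..., p_n) by letter c *)
Definition encodes_at (q : seq pt) (i : nat) (c : letter) : bool :=
  let p := nth dflt_pt q i in
  let S := take i q in
  let sep := separates p [:: nth dflt_pt q i.-1] (take i.-1 q) in
  let ind := independent p S in
  let above := all (fun a => a.2 < p.2) S in
  let below := all (fun a => p.2 < a.2) S in
  let right := all (fun a => a.1 < p.1) S in
  let left := all (fun a => p.1 < a.1) S in
  match c with
  | LU => sep && above
  | LD => sep && below
  | LL => sep && left
  | LR => sep && right
  | N1 => [&& ind, above & right]
  | N2 => [&& ind, above & left]
  | N3 => [&& ind, below & left]
  | N4 => [&& ind, below & right]
  end.

Definition corresponds (n : nat) (w : word) (sigma : 'S_n) : Prop :=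
  size w = n /\
  exists (p0 : pt) (ps : seq pt),
    pin_representation ps sigma /\ pin_seq (p0 :: ps) /\
    forall i, (1 <= i <= n)%N -> encodes_at (p0 :: ps) i (nth N1 w i.-1).

Definition strict_pin_word (w : word) : bool :=
  [&& (2 <= size w)%N, is_numeral (head N1 w) & all is_dir (behead w)].

Definition quasi_strict_pin_word (w : word) : bool :=
  [&& (2 <= size w)%N, is_numeral (nth N1 w 0), is_numeral (nth N1 w 1)
    & all is_dir (drop 2 w)].

Definition varphi (a b : letter) : option word :=
  match a, b with
  | N1, LR => Some [:: LR; LU; LR]
  | N2, LR => Some [:: LL; LU; LR]
  | N3, LR => Some [:: LL; LD; LR]
  | N4, LR => Some [:: LR; LD; LR]
  | N1, LL => Some [:: LR; LU; LL]
  | N2, LL => Some [:: LL; LU; LL]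
  | N3, LL => Some [:: LL; LD; LL]
  | N4, LL => Some [:: LR; LD; LL]
  | N1, LU => Some [:: LU; LR; LU]
  | N2, LU => Some [:: LU; LL; LU]
  | N3, LU => Some [:: LD; LL; LU]
  | N4, LU => Some [:: LD; LR; LU]
  | N1, LD => Some [:: LU; LR; LD]
  | N2, LD => Some [:: LU; LL; LD]
  | N3, LD => Some [:: LD; LL; LD]
  | N4, LD => Some [:: LD; LR; LD]
  | _, _ => None
  end.

Definition phi_numeral (c : letter) : seq word :=
  match c with
  | N1 => [:: [:: LU; LR]; [:: LR; LU]]
  | N2 => [:: [:: LU; LL]; [:: LL; LU]]
  | N3 => [:: [:: LD; LL]; [:: LL; LD]]
  | N4 => [:: [:: LR; LD]; [:: LD; LR]]
  | _ => [::]
  end.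

Definition alternating (s : word) : bool :=
  [&& s != [::], all is_dir s & sorted (fun a b => is_LR a != is_LR b) s].

(* phi w : the list of possible values of phi on w (empty when phi is
   undefined on w; a singleton for a numeral followed by an alternating
   direction word; the two-element set phi(c) for a single numeral c). *)
Definition pin_phi (w : word) : seq word :=
  match w with
  | [::] => [::]
  | [:: c] => phi_numeral c
  | c :: d :: rest =>
      if is_numeral c && alternating (d :: rest) then
        match varphi c d with
        | Some v => [:: v ++ rest]
        | None => [::]
        end
      else [::]
  end.

(* Main.v *)
Require Import Defs.
From HB Require Import structures.
From mathcomp Require Import all_boot all_order all_algebra all_fingroup.
From mathcomp Require Import zify.
Set Implicit Arguments. Unset Strict Implicit. Unset Printing Implicit Defensive.
Import Order.TTheory GRing.Theory Num.Theory.
Local Open Scope ring_scope.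

Definition coordv (d : letter) (p : pt) : int := if is_LR d then p.1 else p.2.
Definition posd (d : letter) : bool := (d == LR) || (d == LU).
Definition beyond (d : letter) (p r : pt) : bool :=
  if posd d then coordv d p < coordv d r else coordv d r < coordv d p.
Definition opp d := match d with LU => LD | LD => LU | LL => LR | LR => LL | c => c end.

Lemma beyond_opp d p r : is_dir d -> beyond (opp d) p r = beyond d r p.
Proof. by case: d. Qed.

Lemma rule p r Q d e : Q != [::] -> is_dir d -> is_dir e -> is_LR d != is_LR e ->
  separates p [:: r] Q -> all (fun a => beyond d a p) (rcons Q r) ->
  all (fun a => beyond e a r) Q ->
  beyond e p r && all (fun a => beyond e a p) Q.
Proof.
move: Q => [//|x Q] _.
rewrite all_rcons /separates /separates_h /separates_v /= !andbT.
case: d => //= _; case: e => //= _ _;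
rewrite /beyond /coordv /= => /orP[/orP[]|/orP[]] /andP[H1 /andP [H2 H3]] /andP [H4 /andP[H5 H6]] /andP[H7 H8];
rewrite ?H1 ?H2 ?H3 ?andbT /=; try lia.
Qed.

Lemma enc_dir q i d : is_dir d -> encodes_at q i d ->
  separates (nth dflt_pt q i) [:: nth dflt_pt q i.-1] (take i.-1 q) &&
  all (fun a => beyond d a (nth dflt_pt q i)) (take i q).
Proof. by case: d. Qed.

Definition comp1 c := match c with N1 | N2 => LU | _ => LD end.
Definition comp2 c := match c with N1 | N4 => LR | _ => LL end.

Lemma enc_num q i c : is_numeral c -> encodes_at q i c ->
  all (fun a => beyond (comp1 c) a (nth dflt_pt q i)) (take i q) &&
  all (fun a => beyond (comp2 c) a (nth dflt_pt q i)) (take i q).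
Proof. by case: c => // _ /and3P[_ -> ->]. Qed.

Lemma beyond_det s t p r p' r' : is_dir s -> is_dir t -> is_LR s != is_LR t ->
  beyond s p r -> beyond t p r -> beyond s p' r' -> beyond t p' r' ->
  [/\ (p.1 < r.1) = (p'.1 < r'.1), (p.2 < r.2) = (p'.2 < r'.2),
      (r.1 < p.1) = (r'.1 < p'.1) & (r.2 < p.2) = (r'.2 < p'.2)].
Proof.
case: s => //= _; case: t => //= _ _; rewrite /beyond /coordv /= => H1 H2 H3 H4;
split; apply/idP/idP => ?; lia.
Qed.

Lemma opp_dir e : is_dir e -> is_dir (opp e). Proof. by case: e. Qed.
Lemma opp_LR e : is_LR (opp e) = is_LR e. Proof. by case: e. Qed.

Lemma nth_in_take (q : seq pt) j c : (j < c)%N -> (c <= size q)%N ->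
  nth dflt_pt q j \in take c q.
Proof. by move=> jc cs; rewrite -(nth_take dflt_pt jc) mem_nth // size_takel. Qed.

Lemma step q b d e : (1 <= b)%N -> (b.+1 < size q)%N -> is_dir d -> is_dir e -> is_LR d != is_LR e ->
  encodes_at q b.+1 d -> all (fun a => beyond e a (nth dflt_pt q b)) (take b q) ->
  forall a, (a <= b)%N -> beyond d (nth dflt_pt q a) (nth dflt_pt q b.+1) &&
    (if a == b then beyond (opp e) (nth dflt_pt q a) (nth dflt_pt q b.+1)
     else beyond e (nth dflt_pt q a) (nth dflt_pt q b.+1)).
Proof.
move=> b1 bs dd de dde /(enc_dir dd) /andP[Hs Ha] He a ab.
have bs1 : (b < size q)%N := ltn_trans (ltnSn b) bs.
have bs0 : (b <= size q)%N := ltnW bs1.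
have Et : take b.+1 q = rcons (take b q) (nth dflt_pt q b).
  by rewrite (take_nth dflt_pt).
rewrite Et in Ha.
have Q0 : take b q != [::].
  apply/eqP => /(congr1 size); rewrite size_takel //=; lia.
have /andP[R1 R2] := rule Q0 dd de dde Hs Ha He.
apply/andP; split.
  move: Ha; rewrite -Et => /allP; apply.
  apply: nth_in_take; [lia|exact: ltnW].
case: eqP => [->|ne]; first by rewrite beyond_opp.
move/allP: R2; apply.
by apply: nth_in_take; lia.
Qed.

Lemma comp_dir c : is_numeral c -> is_dir (comp1 c) && is_dir (comp2 c) && (is_LR (comp1 c) != is_LR (comp2 c)).
Proof. by case: c. Qed.

Lemma get_all (q : seq pt) f j c : all f (take c q) -> (j < c)%N -> (c <= size q)%N -> f (nth dflt_pt q j).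
Proof. by move=> /allP H jc cs; apply: H; apply: nth_in_take. Qed.

Definition gmap (k j : nat) : nat := if j == 1%N then (k - 1)%N else (k + j - 1)%N.

Ltac nlia := try (repeat match goal with H : ?T |- _ =>
   lazymatch T with is_true (leq _ _) => fail | @eq ?A _ _ => tryif unify A nat then fail else clear H
   | not (@eq ?A _ _) => tryif unify A nat then fail else clear H | _ => clear H end end); lia.

Lemma core m n k qu qw (U W : nat -> letter) c :
 size qu = m.+1 -> size qw = n.+1 -> (2 <= k)%N -> (k + m <= n.+1)%N -> (2 <= m)%N ->
 (forall i, (1 <= i <= m)%N -> encodes_at qu i (U i)) ->
 (forall i, (1 <= i <= n)%N -> encodes_at qw i (W i)) ->
 (forall i, (2 <= i <= n)%N -> is_dir (W i)) ->
 (forall i, (2 <= i < n)%N -> is_LR (W i) != is_LR (W i.+1)) ->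
 U 2 = c -> is_numeral c ->
 (W k = comp1 c /\ W k.+1 = comp2 c \/ W k = comp2 c /\ W k.+1 = comp1 c) ->
 (forall i, (3 <= i <= m)%N -> U i = W (k + i - 1)%N) ->
 forall a b, (1 <= a)%N -> (a < b)%N -> (b <= m)%N ->
 [/\ ((nth dflt_pt qu a).1 < (nth dflt_pt qu b).1) = ((nth dflt_pt qw (gmap k a)).1 < (nth dflt_pt qw (gmap k b)).1),
     ((nth dflt_pt qu a).2 < (nth dflt_pt qu b).2) = ((nth dflt_pt qw (gmap k a)).2 < (nth dflt_pt qw (gmap k b)).2),
     ((nth dflt_pt qu b).1 < (nth dflt_pt qu a).1) = ((nth dflt_pt qw (gmap k b)).1 < (nth dflt_pt qw (gmap k a)).1) &
     ((nth dflt_pt qu b).2 < (nth dflt_pt qu a).2) = ((nth dflt_pt qw (gmap k b)).2 < (nth dflt_pt qw (gmap k a)).2)].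
Proof.
move=> su sw k2 km m2 Eu Ew Wd Wa U2 cn Wc UW a b a1 ab bm.
set g := gmap k. set P := nth dflt_pt qu. set R := nth dflt_pt qw.
have /andP[/andP[c1d c2d] c12] := comp_dir cn.
have encu2 := Eu 2%N (ltac:(nlia)); rewrite U2 in encu2.
have /andP[Hc1 Hc2] := enc_num cn encu2.
case: b ab bm => [|b0] ab bm; first nlia.
have [b02|b03] : b0 = 1%N \/ (2 <= b0)%N by nlia.
-
  subst b0; have a1' : a = 1%N by nlia. subst a.
  have Hp1 : beyond (comp1 c) (P 1%N) (P 2%N) by apply: (get_all Hc1) => //; rewrite su; nlia.
  have Hp2 : beyond (comp2 c) (P 1%N) (P 2%N) by apply: (get_all Hc2) => //; rewrite su; nlia.
  have ga : g 1%N = (k - 1)%N by rewrite /g /gmap eqxx.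
  have gb : g 2%N = k.+1 by rewrite /g /gmap /=; nlia.
  rewrite ga gb.
  have Wk : is_dir (W k) by apply: Wd; nlia.
  have Wk1 : is_dir (W k.+1) by apply: Wd; nlia.
  have Wkk : is_LR (W k.+1) != is_LR (W k) by rewrite eq_sym; apply: Wa; nlia.
  have /andP[_ Hall] := enc_dir Wk (Ew k ltac:(nlia)).
  have := @step qw k (W k.+1) (W k) ltac:(nlia) ltac:(rewrite sw; nlia)
     Wk1 Wk Wkk (Ew k.+1 ltac:(nlia)) Hall (k - 1)%N ltac:(nlia).
  have -> : (k - 1 == k)%N = false by apply/eqnP; nlia.
  move=> /andP[S1 S2].
  case: Wc => [[E1 E2]|[E1 E2]]; rewrite E1 E2 in S1 S2.
    exact: (beyond_det c1d c2d c12 Hp1 Hp2 S2 S1).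
  exact: (beyond_det c1d c2d c12 Hp1 Hp2 S1 S2).
-
  set e := W (k + b0 - 1)%N.
  set d := U b0.+1.
  have dW : d = W (k + b0)%N by rewrite /d UW; [congr W; nlia| nlia].
  have ed : is_dir e by apply: Wd; nlia.
  have dd : is_dir d by rewrite dW; apply: Wd; nlia.
  have de : is_LR d != is_LR e.
    have E1 : (k + b0 - 1).+1 = (k + b0)%N by nlia.
    have := Wa (k + b0 - 1)%N ltac:(nlia); rewrite E1 -dW eq_sym; exact.
  have Hu : all (fun x => beyond e x (P b0)) (take b0 qu).
    have [b03'|b04] : b0 = 2%N \/ (3 <= b0)%N by nlia.
      subst b0; rewrite /e. have -> : (k + 2 - 1)%N = k.+1 by nlia.
      by case: Wc => [[_ ->]|[_ ->]]; [exact: Hc2|exact: Hc1].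
    have eU : e = U b0 by rewrite /e UW //; nlia.
    rewrite eU; have Ud : is_dir (U b0) by rewrite -eU.
    by have /andP[_ ->] := enc_dir Ud (Eu b0 ltac:(nlia)).
  have Hw : all (fun x => beyond e x (R (k + b0 - 1)%N)) (take (k + b0 - 1) qw).
    by have /andP[_ ->] := enc_dir ed (Ew (k + b0 - 1)%N ltac:(nlia)).
  have := @step qu b0 d e ltac:(nlia) ltac:(rewrite su; nlia) dd ed de (Eu b0.+1 ltac:(nlia)) Hu a ltac:(nlia).
  have encw : encodes_at qw (k + b0 - 1).+1 d.
    have E2 : (k + b0 - 1).+1 = (k + b0)%N by nlia.
    rewrite E2 dW; apply: Ew; nlia.
  have := @step qw (k + b0 - 1)%N d e ltac:(nlia) ltac:(rewrite sw; nlia) dd ed de encw Hw (g a) ltac:(rewrite /g /gmap; case: eqP => _; nlia).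
  have gb : g b0.+1 = (k + b0 - 1).+1.
    rewrite /g /gmap; have -> : (b0.+1 == 1%N) = false by case: (b0) b03.
    nlia.
  rewrite gb.
  have -> : (g a == k + b0 - 1)%N = (a == b0).
    rewrite /g /gmap; have [->|a2] : a = 1%N \/ (2 <= a)%N by nlia.
      rewrite eqxx; apply/idP/idP => /eqnP h; apply/eqnP; nlia.
    have -> : (a == 1%N) = false by case: (a) a2 => [|[|]].
    apply/idP/idP => /eqnP h; apply/eqnP; nlia.
  case: (eqVneq a b0) => [->|ne]; rewrite ?eqxx => /andP[S1 S2] /andP[T1 T2].
    apply: (beyond_det dd (opp_dir ed) _ T1 T2 S1 S2); by rewrite opp_LR.
  exact: (beyond_det dd ed de T1 T2 S1 S2).
Qed.

Lemma varphi_spec c d t : varphi c d = Some t -> exists a b, t = [:: a; b; d] /\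
  ((a = comp1 c /\ b = comp2 c) \/ (a = comp2 c /\ b = comp1 c)).
Proof.
case: c; case: d => //=; move=> [<-]; do 2 eexists; (split; [reflexivity| first [by left | by right]]).
Qed.

Lemma phi_w w v' : strict_pin_word w -> v' \in pin_phi w ->
  size v' = (size w).+1 /\ (forall j, nth N1 v' j.+2 = nth N1 w j.+1) /\
  sorted (fun a b => is_LR a != is_LR b) (behead w).
Proof.
case: w => [|c [|d rest]] //=.
case: ifP => // /andP[_ /and3P[_ _ Hs]] _.
case E: (varphi c d) => [t|] //; rewrite inE => /eqP ->.
have [a [b [-> _]]] := varphi_spec E.
by split.
Qed.

Lemma phi_u u v : quasi_strict_pin_word u -> v \in pin_phi (behead u) ->
  size v = size u /\ (forall j, nth N1 v j.+2 = nth N1 u j.+2) /\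
  (nth N1 v 0 = comp1 (nth N1 u 1) /\ nth N1 v 1 = comp2 (nth N1 u 1) \/
   nth N1 v 0 = comp2 (nth N1 u 1) /\ nth N1 v 1 = comp1 (nth N1 u 1)).
Proof.
case: u => [|c1 [|c2 [|d3 rest]]] //.
  rewrite /quasi_strict_pin_word => /and4P[_ _ /= H _].
  by case: c2 H => // _; rewrite !inE => /orP[]/eqP->; (split; [done|split; [by []| first [by left|by right]]]).
rewrite /= => _.
case: ifP => // _.
case E: (varphi c2 d3) => [t|] //; rewrite inE => /eqP ->.
have [a [b [-> H]]] := varphi_spec E.
by split.
Qed.

Lemma sorted_nth_rel (T : Type) (r : rel T) x s i : sorted r s -> (i.+1 < size s)%N ->
  r (nth x s i) (nth x s i.+1).
Proof.
case: s => [|a s] //= /(pathP a) H Hi.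
have Hi' : (i < size s)%N by [].
have Hi2 : (i < size (a :: s))%N by apply: ltn_trans Hi.
have := H i Hi'.
by rewrite (set_nth_default x a Hi') (set_nth_default x a Hi2).
Qed.

Lemma nth_cons_pred (q : seq pt) p0 g : (1 <= g)%N -> nth dflt_pt (p0 :: q) g = nth dflt_pt q g.-1.
Proof. by case: g. Qed.

Unset Implicit Arguments.

Theorem lemma9 (m n : nat) (u w : word) (pi : 'S_m) (sigma : 'S_n) :
  quasi_strict_pin_word u -> corresponds u pi ->
  strict_pin_word w -> corresponds w sigma ->
  (exists (v v' y y' : word),
      v \in pin_phi (behead u) /\ v' \in pin_phi w /\
      v' = y ++ v ++ y' /\ (2 <= size y)%N) ->
  pattern_le pi sigma.
Proof.
move=> Hqu [szu [p0u [psu [[_ [Hsu [fu [fub Hfu]]]] [_ Eu]]]]]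
       Hsw [szw [p0w [psw [[_ [Hsw' [fw [fwb Hfw]]]] [_ Ew]]]]]
       [v [v' [y [y' [Hv [Hv' [Ev' Hy]]]]]]].
have [szv [Hvu Hvc]] := phi_u Hqu Hv.
have [szv' [Hv'w Hsort]] := phi_w Hsw Hv'.
have [k' Ek] : exists k', size y = k'.+2 by case: (size y) Hy => [|[|j]] // _; exists j.
set k := k'.+2.
have m2 : (2 <= m)%N by move: Hqu => /and4P[]; rewrite szu.
have km : (k + m <= n.+1)%N.
  have := congr1 size Ev'; rewrite !size_cat szv' szw szv szu Ek; nlia.
have nthv : forall i, (i < m)%N -> nth N1 v' (k + i) = nth N1 v i.
  move=> i im; rewrite Ev' nth_cat /k -Ek ltnNge leq_addr /= addKn nth_cat szv szu im //.
have c_num : is_numeral (nth N1 u 1) by move: Hqu => /and4P[].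
have Wd : forall i, (2 <= i <= n)%N -> is_dir (nth N1 w i.-1).
  case=> [|[|i]] // /andP[_ Hi]; move: Hsw => /and3P[_ _ /allP H]; apply: H.
  rewrite -nth_behead; apply: mem_nth; rewrite size_behead szw; nlia.
have Wa : forall i, (2 <= i < n)%N -> is_LR (nth N1 w i.-1) != is_LR (nth N1 w i).
  case=> [|[|i]] // /andP[_ Hi].
  have := @sorted_nth_rel _ _ N1 _ i Hsort; rewrite !nth_behead; apply.
  rewrite size_behead szw; nlia.
have Wc : nth N1 w k.-1 = comp1 (nth N1 u 1) /\ nth N1 w k = comp2 (nth N1 u 1) \/
          nth N1 w k.-1 = comp2 (nth N1 u 1) /\ nth N1 w k = comp1 (nth N1 u 1).
  have E0 : nth N1 w k.-1 = nth N1 v 0.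
    have := nthv 0%N ltac:(nlia); rewrite addn0 /k Hv'w; exact.
  have E1 : nth N1 w k = nth N1 v 1.
    have := nthv 1%N ltac:(nlia); rewrite addn1 /k Hv'w; exact.
  by rewrite E0 E1.
have UW : forall i, (3 <= i <= m)%N -> nth N1 u i.-1 = nth N1 w (k + i - 1)%N.-1.
  case=> [|[|[|i]]] // /andP[_ Hi] /=.
  rewrite -Hvu -nthv; last by nlia.
  have -> : (k + i.+2 = (k' + i.+2).+2)%N by rewrite /k; nlia.
  by rewrite Hv'w !addnS.
have Hcore := @core m n k (p0u :: psu) (p0w :: psw) (fun i => nth N1 u i.-1)
   (fun i => nth N1 w i.-1) (nth N1 u 1) ltac:(by rewrite /= Hsu) ltac:(by rewrite /= Hsw')
   ltac:(by []) km m2 Eu Ew Wd Wa erefl c_num Wc UW.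
have gpos : forall j, (1 <= gmap k j.+1)%N.
  by move=> j; rewrite /gmap; case: eqP => _; rewrite /k; nlia.
have Gn : forall j : 'I_m, ((gmap k j.+1).-1 < n)%N.
  move=> j; have jm := ltn_ord j; have := gpos j; rewrite /gmap.
  case: eqP => _; rewrite /k => h; rewrite subn1 /=; nlia.
pose G (j : 'I_m) : 'I_n := Ordinal (Gn j).
have GE : forall j : 'I_m, nth dflt_pt psw (G j) = nth dflt_pt (p0w :: psw) (gmap k j.+1).
  by move=> j; rewrite nth_cons_pred.
have KC : forall a b : 'I_m,
   ((nth dflt_pt psu a).1 < (nth dflt_pt psu b).1) = ((nth dflt_pt psw (G a)).1 < (nth dflt_pt psw (G b)).1) /\
   ((nth dflt_pt psu a).2 < (nth dflt_pt psu b).2) = ((nth dflt_pt psw (G a)).2 < (nth dflt_pt psw (G b)).2).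
  move=> a b; rewrite !GE.
  have -> : nth dflt_pt psu a = nth dflt_pt (p0u :: psu) a.+1 by [].
  have -> : nth dflt_pt psu b = nth dflt_pt (p0u :: psu) b.+1 by [].
  case: (ltngtP a b) => ab.
  - by have [-> -> _ _] := Hcore a.+1 b.+1 erefl ab (ltn_ord b).
  - by have [_ _ -> ->] := Hcore b.+1 a.+1 erefl ab (ltn_ord a).
  - by rewrite (ord_inj ab) !ltxx.
have [fu' fuK fuK'] := fub.
exists (fun i => fw (G (fu' i))); split.
- move=> i j ij.
  have := (Hfu (fu' i) (fu' j)).1; rewrite !fuK' ij (KC _ _).1 (Hfw _ _).1 => ->.
  by [].
- move=> i j.
  have := (Hfu (fu' i) (fu' j)).2; rewrite !fuK' (KC _ _).2 (Hfw _ _).2 => ->.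
  by [].
Qed.
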